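(* For every nonnegative integer $d$ and every $\tau\ge1$, $$\int_0^\infty\left(\int_\tau^x\frac{|H_d(t)|}{t}\,dt\right)\varphi(x)\,dx\le e^{-\tau^2/4}.$$
   Context: $\varphi(x)=\frac{1}{\sqrt{2\pi}}e^{-x^2/2}$ is the standard Gaussian density on $\mathbb{R}$. The Hermite polynomials $(H_k)_{k\ge0}$ are the orthonormal polynomials for $\mathcal{N}(0,1)$ with $\deg H_k=k$ and positive leading coefficient (the probabilist's Hermite polynomials divided by $\sqrt{k!}$). For $x<\tau$ the inner integral $\int_\tau^x$ is the usual oriented integral. *)

(* Defs.v *)
From Stdlib Require Import Reals.
From Coquelicot Require Import Coquelicot.
Open Scope R_scope.

Definition phi (x : R) : R := / sqrt (2 * PI) * exp (- x ^ 2 / 2).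

(* herm_pair n x = (He_n x, He_(n+1) x), probabilist's Hermite polynomials:
   He_0 = 1, He_1 = x, He_(k+2) = x He_(k+1) - (k+1) He_k. *)
Fixpoint herm_pair (n : nat) (x : R) : R * R :=
  match n with
  | O => (1, x)
  | S k => let (a, b) := herm_pair k x in (b, x * b - INR (S k) * a)
  end.

Definition He (n : nat) (x : R) : R := fst (herm_pair n x).

(* Orthonormal Hermite polynomials for N(0,1): H_k = He_k / sqrt(k!). *)
Definition H (n : nat) (x : R) : R := He n x / sqrt (INR (Factorial.fact n)).

(* Main.v *)
Require Import Defs.
From Stdlib Require Import Reals.
From Coquelicot Require Import Coquelicot.
From Stdlib Require Import Lra Lia Classical_Prop.
Open Scope R_scope.


Lemma He_S n x : He (S n) x = snd (herm_pair n x).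
Proof. unfold He; simpl; destruct (herm_pair n x); reflexivity. Qed.

Lemma He_rec n x : He (S n) x = x * He n x - INR n * He (pred n) x.
Proof.
  destruct n as [|n].
  - unfold He; simpl; ring.
  - rewrite He_S. simpl pred. rewrite He_S. unfold He. simpl.
    destruct (herm_pair n x); simpl; reflexivity.
Qed.

Lemma He_deriv n x : is_derive (He n) x (INR n * He (pred n) x).
Proof.
  revert x.
  assert (H2 : forall m, (forall x, is_derive (He m) x (INR m * He (pred m) x)) /\
                   (forall x, is_derive (He (S m)) x (INR (S m) * He m x))).
  { clear n. intro m; induction m as [|n IH].
    - split; intro x.
      + apply (is_derive_ext (fun _ => 1)). { intro t; reflexivity. }
        simpl. replace (0 * He 0 x) with 0 by ring. auto_derive; auto.
      + apply (is_derive_ext (fun t => t)). { intro t; unfold He; reflexivity. }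
        replace (INR 1 * He 0 x) with 1 by (unfold He; simpl; ring). auto_derive; auto.
    - destruct IH as [IH1 IH2]. split; [exact IH2|].
      intro x.
      apply (is_derive_ext (fun t => t * He (S n) t - INR (S n) * He n t)).
      { intro t. rewrite (He_rec (S n)). reflexivity. }
      replace (INR (S (S n)) * He (S n) x) with
        (1 * He (S n) x + x * (INR (S n) * He n x) - INR (S n) * (INR n * He (pred n) x)).
      2:{ rewrite (He_rec n x). rewrite !S_INR. ring. }
      apply (is_derive_minus (fun t => t * He (S n) t) (fun t => INR (S n) * He n t)).
      + apply Derive.is_derive_mult. auto_derive; auto. apply IH2.
      + apply is_derive_scal. apply IH1. }
  intro x. apply H2.
Qed.

Lemma He_cont n x : continuous (He n) x.
Proof. apply (ex_derive_continuous (K:=R_AbsRing) (V:=R_NormedModule) (He n) x). eexists. apply He_deriv. Qed.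

Lemma He0_prod n : He n 0 * He (S n) 0 = 0.
Proof.
  rewrite He_S. unfold He.
  induction n as [|n IH]. - simpl. ring.
  - cbn [herm_pair]. destruct (herm_pair n 0) as [a b]. cbn [fst snd] in *.
    set (c := INR (S n)). replace (b * (0 * b - c * a)) with (- c * (a * b)) by ring.
    rewrite IH. ring.
Qed.

Lemma He_pos x k : 0 < x -> 4 * INR k <= x ^ 2 ->
  0 < He k x /\ x / 2 * He k x <= He (S k) x.
Proof.
  intros Hx. induction k as [|k IH]; intro Hk.
  - unfold He; simpl. lra.
  - assert (Hk' : 4 * INR k <= x ^ 2) by (rewrite S_INR in Hk; lra).
    destruct (IH Hk') as [P1 P2]. split. 
    + assert (0 < x / 2 * He k x) by (apply Rmult_lt_0_compat; lra). lra.
    + rewrite (He_rec (S k)). simpl pred.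
      rewrite S_INR in Hk.
      assert (Hq : x * He k x <= 2 * He (S k) x) by lra.
      assert (0 < He (S k) x) by (assert (0 < x / 2 * He k x) by (apply Rmult_lt_0_compat; lra); lra).
      assert (x * (INR k + 1) * He k x <= 2 * (INR k + 1) * He (S k) x).
      { assert (0 <= INR k) by apply pos_INR. nra. }
      rewrite S_INR.
      assert (x * (x/2 * He (S k) x) >= x* (INR k + 1) * 2 / x * He (S k) x) by
        (field_simplify; [|lra]; nra).
      apply Rmult_le_reg_l with x; [lra|].
      field_simplify in H1; [|lra]. nra.
Qed.
Definition s := / sqrt (2 * PI).
Lemma s_pos : 0 < s.
Proof. unfold s. apply Rinv_0_lt_compat, sqrt_lt_R0. pose proof PI_RGT_0; lra. Qed.
Lemma s_le : s <= 1/2.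
Proof.
  unfold s. assert (2 <= sqrt (2 * PI)).
  { assert (E : sqrt 4 = 2) by (replace 4 with (2*2) by ring; apply sqrt_square; lra).
    rewrite <- E at 1. apply sqrt_le_1_alt. pose proof PI2_3_2. lra. }
  replace (1/2) with (/2) by field. apply Rinv_le_contravar; lra.
Qed.
Lemma phi_eq x : phi x = s * exp (- x ^ 2 / 2).
Proof. reflexivity. Qed.
Lemma phi_pos x : 0 < phi x.
Proof. rewrite phi_eq. apply Rmult_lt_0_compat. apply s_pos. apply exp_pos. Qed.
Lemma exp_le1 y : y <= 0 -> exp y <= 1.
Proof. intro h. destruct (Rle_lt_or_eq_dec _ _ h) as [h'|h'].
  left; rewrite <- exp_0; apply exp_increasing; auto. rewrite h', exp_0; lra. Qed.
Lemma phi_le x : phi x <= s.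
Proof. rewrite phi_eq. pose proof s_pos.
  assert (exp (- x^2/2) <= 1) by (apply exp_le1; nra). nra. Qed.
Lemma phi_deriv x : is_derive phi x (- x * phi x).
Proof. unfold phi. auto_derive; auto. replace (- (x * (x * 1)) * / 2) with (- x ^ 2 / 2) by (unfold Rdiv; ring). set (c := / sqrt (2 * PI)). set (e := exp _). field. Qed.
Lemma phi_cont x : continuous phi x.
Proof. apply (ex_derive_continuous (K:=R_AbsRing) (V:=R_NormedModule) phi x). eexists. apply phi_deriv. Qed.

Lemma RInt_Rminus f g a b : ex_RInt f a b -> ex_RInt g a b ->
  RInt (fun x => f x - g x) a b = RInt f a b - RInt g a b.
Proof. intros; exact (RInt_minus f g a b H H0). Qed.
Lemma RInt_Rplus f g a b : ex_RInt f a b -> ex_RInt g a b ->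
  RInt (fun x => f x + g x) a b = RInt f a b + RInt g a b.
Proof. intros; exact (RInt_plus f g a b H H0). Qed.
Lemma RInt_Rscal f k a b : ex_RInt f a b ->
  RInt (fun x => k * f x) a b = k * RInt f a b.
Proof. intros; exact (RInt_scal f a b k H). Qed.
Lemma RInt_Chasles' f a b c : ex_RInt f a b -> ex_RInt f b c ->
  RInt f a b + RInt f b c = RInt f a c.
Proof. intros; exact (RInt_Chasles f a b c H H0). Qed.
Lemma RInt_swap' f a b : ex_RInt f a b -> RInt f b a = - RInt f a b.
Proof. intros. rewrite <- (opp_RInt_swap f a b H). reflexivity. Qed.

Lemma cont_of_derive (f : R -> R) (df x : R) : is_derive f x df -> continuous f x.
Proof. intro Hd. apply (ex_derive_continuous (K:=R_AbsRing) (V:=R_NormedModule) f x). eexists; eauto. Qed.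

Lemma cont_mult (f g : R -> R) (x : R) : continuous f x -> continuous g x -> continuous (fun y => f y * g y) x.
Proof. intros. apply (continuous_mult (K:=R_AbsRing) f g x); auto. Qed.
Lemma cont_plus (f g : R -> R) (x : R) : continuous f x -> continuous g x -> continuous (fun y => f y + g y) x.
Proof. intros. apply (continuous_plus (U:=R_UniformSpace) (K:=R_AbsRing) (V:=R_NormedModule) f g x); auto. Qed.

Lemma cont_const (c x : R) : continuous (fun _ : R => c) x.
Proof. apply (continuous_const (U:=R_UniformSpace) (V:=R_UniformSpace)). Qed.
Lemma cont_opp (f : R -> R) (x : R) : continuous f x -> continuous (fun y => - f y) x.
Proof. intros. apply (continuous_opp (U:=R_UniformSpace) (K:=R_AbsRing) (V:=R_NormedModule) f x); auto. Qed.
Lemma cont_id (x : R) : continuous (fun y : R => y) x.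
Proof. apply (continuous_id (U:=R_UniformSpace)). Qed.

Lemma RInt_ext' (f g : R -> R) (a b : R) : (forall x, f x = g x) -> RInt f a b = RInt g a b.
Proof. intros H. apply RInt_ext. intros; apply H. Qed.

Lemma ex_cont (f : R -> R) a b : (forall z, Rmin a b <= z <= Rmax a b -> continuous f z) -> ex_RInt f a b.
Proof. intros. apply (ex_RInt_continuous (V:=R_CompleteNormedModule)); auto. Qed.

Lemma ibp (F f U u : R -> R) (a b : R) :
  (forall x, Rmin a b <= x <= Rmax a b ->
     is_derive F x (f x) /\ is_derive U x (u x) /\ continuous f x /\ continuous u x) ->
  RInt (fun x => F x * u x) a b = F b * U b - F a * U a - RInt (fun x => f x * U x) a b.
Proof.
  intros Hx.
  assert (Hd : is_RInt (fun x => f x * U x + F x * u x) a b (F b * U b - F a * U a)).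
  { apply (is_RInt_derive (fun x => F x * U x)).
    - intros x Hx'. destruct (Hx x Hx') as (H1 & H2 & _).
      apply (is_derive_ext (fun t => F t * U t)); [reflexivity|].
      replace (f x * U x + F x * u x) with (f x * U x + F x * u x) by ring.
      apply Derive.is_derive_mult; auto.
    - intros x Hx'. destruct (Hx x Hx') as (H1 & H2 & H3 & H4).
      apply cont_plus; apply cont_mult; auto.
      eapply cont_of_derive; eauto. eapply cont_of_derive; eauto. }
  assert (E1 : ex_RInt (fun x => f x * U x) a b).
  { apply ex_cont. intros x Hx'. destruct (Hx x Hx') as (H1 & H2 & H3 & H4).
    apply cont_mult; auto. eapply cont_of_derive; eauto. }
  assert (E2 : ex_RInt (fun x => F x * u x) a b).
  { apply ex_cont. intros x Hx'. destruct (Hx x Hx') as (H1 & H2 & H3 & H4).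
    apply cont_mult; auto. eapply cont_of_derive; eauto. }
  apply (is_RInt_unique (V:=R_CompleteNormedModule)) in Hd. rewrite RInt_Rplus in Hd; auto. lra.
Qed.
Lemma lim_pinfty (G : R -> R) (c M : R) :
  (forall x y, c <= x -> x <= y -> G x <= G y) -> (forall x, c <= x -> G x <= M) ->
  exists l, filterlim G (Rbar_locally p_infty) (locally l) /\ l <= M.
Proof.
  intros Hm Hb.
  set (E := fun y => exists x, c <= x /\ y = G x).
  assert (HE1 : bound E). { exists M. intros y [x [Hx ->]]. auto. }
  assert (HE2 : exists y, E y). { exists (G c). exists c. split; [lra|auto]. }
  destruct (completeness E HE1 HE2) as [L [HL1 HL2]].
  exists L. split.
  - apply (filterlim_locally (F := Rbar_locally p_infty)). intro eps.
    assert (Hex : exists x0, c <= x0 /\ L - eps < G x0).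
    { apply Classical_Prop.NNPP. intro Hn.
      assert (L <= L - eps). { apply HL2. intros y [x [Hx ->]].
        apply Rnot_lt_le. intro h. apply Hn. exists x; auto. }
      pose proof (cond_pos eps). lra. }
    destruct Hex as [x0 [Hx0 Hlt]].
    exists x0. intros x Hx. change (Rabs (G x - L) < eps).
    assert (G x0 <= G x) by (apply Hm; lra).
    assert (G x <= L) by (apply HL1; exists x; split; [lra|auto]).
    rewrite Rabs_left1; lra.
  - apply HL2. intros y [x [Hx ->]]. auto.
Qed.

Lemma lim_right (G : R -> R) (c d m : R) : c < d ->
  (forall x y, c < x -> x <= y -> y <= d -> G x <= G y) ->
  (forall x, c < x -> x <= d -> m <= G x) ->
  exists l, filterlim G (at_right c) (locally l) /\ l <= G d.
Proof.
  intros Hcd Hm Hb.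
  set (E := fun y => exists x, c < x <= d /\ y = - G x).
  assert (HE1 : bound E). { exists (- m). intros y [x [Hx ->]]. specialize (Hb x). lra. }
  assert (HE2 : exists y, E y). { exists (- G d). exists d. split; [lra|auto]. }
  destruct (completeness E HE1 HE2) as [L [HL1 HL2]].
  exists (- L). split.
  - apply (filterlim_locally (F := at_right c)). intro eps.
    assert (Hex : exists x0, c < x0 <= d /\ L - eps < - G x0).
    { apply Classical_Prop.NNPP. intro Hn.
      assert (L <= L - eps). { apply HL2. intros y [x [Hx ->]].
        apply Rnot_lt_le. intro h. apply Hn. exists x; auto. }
      pose proof (cond_pos eps). lra. }
    destruct Hex as [x0 [Hx0 Hlt]].
    assert (Hp : 0 < x0 - c) by lra.
    exists (mkposreal _ Hp). intros x Hx Hcx. change (Rabs (x - c) < x0 - c) in Hx.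
    change (Rabs (G x - - L) < eps).
    assert (x < x0) by (apply Rabs_def2 in Hx; lra).
    assert (G x <= G x0) by (apply Hm; lra).
    assert (- G x <= L) by (apply HL1; exists x; split; [lra|auto]).
    rewrite Rabs_pos_eq; lra.
  - assert (- G d <= L) by (apply HL1; exists d; split; [lra|auto]). lra.
Qed.

Lemma gen_pinfty (f : R -> R) (a l : R) :
  (forall b, a <= b -> ex_RInt f a b) ->
  filterlim (fun b => RInt f a b) (Rbar_locally p_infty) (locally l) ->
  is_RInt_gen f (at_point a) (Rbar_locally p_infty) l.
Proof.
  intros Hex Hl P HP.
  specialize (Hl P HP).
  apply Filter_prod with (Q := fun x => x = a)
     (R := fun b => a <= b /\ P (RInt f a b)).
  - reflexivity.
  - apply filter_and; auto. exists a. intros; lra.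
  - intros x y -> [Hy HPy]. exists (RInt f a y). split; auto.
    apply (RInt_correct (V:=R_CompleteNormedModule)). auto.
Qed.

Lemma gen_right (f : R -> R) (c b l : R) : c < b ->
  (forall a, c < a -> a <= b -> ex_RInt f a b) ->
  filterlim (fun a => RInt f a b) (at_right c) (locally l) ->
  is_RInt_gen f (at_right c) (at_point b) l.
Proof.
  intros Hcb Hex Hl P HP.
  specialize (Hl P HP).
  apply Filter_prod with (Q := fun a => (c < a /\ a <= b) /\ P (RInt f a b))
     (R := fun x => x = b).
  - apply filter_and; auto.
    assert (Hp : 0 < b - c) by lra.
    exists (mkposreal _ Hp). intros x Hx Hcx. change (Rabs (x - c) < b - c) in Hx.
    apply Rabs_def2 in Hx. lra.
  - reflexivity.
  - intros x y [Hx HPx] ->. exists (RInt f x b). split; auto.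
    apply (RInt_correct (V:=R_CompleteNormedModule)). apply Hex; tauto.
Qed.

Lemma is_derive_eq (f : R -> R) (x l l' : R) : is_derive f x l -> l = l' -> is_derive f x l'.
Proof. intros H ->; exact H. Qed.

Lemma U_deriv n x : is_derive (fun t => He n t * phi t) x (- He (S n) x * phi x).
Proof.
  eapply is_derive_eq. apply Derive.is_derive_mult. apply He_deriv. apply phi_deriv.
  rewrite (He_rec n x). ring.
Qed.

Lemma L2 n B : 0 <= B -> 4 * INR n <= B ^ 2 ->
  RInt (fun x => He n x ^ 2 * phi x) 0 B <= INR (Factorial.fact n) * RInt phi 0 B.
Proof.
  intros HB. induction n as [|n IH]; intro Hn.
  - rewrite (RInt_ext' _ phi). simpl; lra.
    intros x. unfold He; simpl; ring.
  - assert (Hn' : 4 * INR n <= B ^ 2) by (rewrite S_INR in Hn; lra).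
    specialize (IH Hn').
    assert (HBp : 0 < B). { rewrite S_INR in Hn. pose proof (pos_INR n).
      destruct HB as [|HB]; auto. subst. simpl in Hn. lra. }
    pose proof (ibp (He (S n)) (fun x => INR (S n) * He n x) (fun t => He n t * phi t)
                 (fun x => - He (S n) x * phi x) 0 B) as Hi.
    assert (Hc : forall x, continuous (fun x => He (S n) x * phi x) x).
    { intro x. apply cont_mult. apply He_cont. apply phi_cont. }
    cbv beta in Hi. lapply Hi; [intro Hi'; clear Hi|].
    2:{ intros x _. split; [|split; [|split]].
      - apply He_deriv. - apply U_deriv.
      - apply cont_mult. apply cont_const. apply He_cont.
      - apply cont_mult. apply (cont_opp (He (S n))). apply He_cont. apply phi_cont. 
        }
    rewrite (RInt_ext' (fun x => He (S n) x * (- He (S n) x * phi x)) (fun x => - (He (S n) x ^ 2 * phi x))) in Hi'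
      by (intros; ring).
    rewrite (RInt_ext' (fun x => INR (S n) * He n x * (He n x * phi x)) (fun x => INR (S n) * (He n x ^ 2 * phi x))) in Hi'
      by (intros; ring).
    assert (E1 : ex_RInt (fun x => He (S n) x ^ 2 * phi x) 0 B).
    { apply ex_cont. intros. apply cont_mult; [|apply phi_cont].
      apply (cont_mult (He (S n)) (fun x => He (S n) x * 1)). apply He_cont.
      apply (cont_mult (He (S n)) (fun _ => 1)). apply He_cont. apply cont_const. }
    assert (E2 : ex_RInt (fun x => He n x ^ 2 * phi x) 0 B).
    { apply ex_cont. intros. apply cont_mult; [|apply phi_cont].
      apply (cont_mult (He n) (fun x => He n x * 1)). apply He_cont.
      apply (cont_mult (He n) (fun _ => 1)). apply He_cont. apply cont_const. }
    rewrite (RInt_Rscal (fun x => He n x ^ 2 * phi x)) in Hi' by auto.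
    rewrite (RInt_ext' (fun x => - (He (S n) x ^ 2 * phi x)) (fun x => (-1) * (He (S n) x ^ 2 * phi x))) in Hi'
      by (intros; ring).
    rewrite (RInt_Rscal (fun x => He (S n) x ^ 2 * phi x)) in Hi' by auto.
    assert (Q0 : He (S n) 0 * (He n 0 * phi 0) = 0).
    { rewrite <- Rmult_assoc, (Rmult_comm (He (S n) 0)), He0_prod. ring. }
    assert (QB : 0 <= He (S n) B * (He n B * phi B)).
    { destruct (He_pos B n HBp Hn') as [P1 _]. destruct (He_pos B (S n) HBp Hn) as [P2 _].
      pose proof (phi_pos B). apply Rmult_le_pos; [lra|]. apply Rmult_le_pos; lra. }
    change (Factorial.fact (S n)) with (S n * Factorial.fact n)%nat. rewrite mult_INR.
    assert (0 <= INR (S n)) by apply pos_INR.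
    assert (INR (S n) * RInt (fun x => He n x ^ 2 * phi x) 0 B <= INR (S n) * (INR (Factorial.fact n) * RInt phi 0 B))
      by (apply Rmult_le_compat_l; auto).
    lra.
Qed.

Lemma exp_half : exp (1/2) <= 7/4.
Proof.
  assert (E : exp (1/2) * exp (1/2) = exp 1) by (rewrite <- exp_plus; f_equal; field).
  pose proof exp_le_3. pose proof (exp_pos (1/2)). nra.
Qed.

Lemma ex_all (h : R -> R) a b : (forall x, continuous h x) -> ex_RInt h a b.
Proof. intros; apply ex_cont; auto. Qed.

Lemma sub_int (h : R -> R) a b c d : (forall x, continuous h x) -> (forall x, 0 <= h x) ->
  c <= a -> a <= b -> b <= d -> RInt h a b <= RInt h c d.
Proof.
  intros Hc Hp H1 H2 H3.
  rewrite <- (RInt_Chasles' h c a d) by (apply ex_all; auto).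
  rewrite <- (RInt_Chasles' h a b d) by (apply ex_all; auto).
  assert (0 <= RInt h c a) by (apply RInt_ge_0; auto; apply ex_all; auto).
  assert (0 <= RInt h b d) by (apply RInt_ge_0; auto; apply ex_all; auto).
  lra.
Qed.

Lemma phi_int_bound B : 0 <= B -> RInt phi 0 B <= 7/8.
Proof.
  intro HB.
  assert (Hd : is_RInt (fun x => s * exp (1/2 - x)) 0 B
                 ((- s * exp (1/2 - B)) - (- s * exp (1/2 - 0)))).
  { apply (is_RInt_derive (fun x => - s * exp (1/2 - x))).
    - intros x _. auto_derive; auto. unfold Rminus; ring.
    - intros x _. apply (cont_of_derive _ (s * (- exp (1/2 - x)))). auto_derive; auto. unfold Rminus; ring. }
  apply (is_RInt_unique (V:=R_CompleteNormedModule)) in Hd.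
  assert (RInt phi 0 B <= RInt (fun x => s * exp (1/2 - x)) 0 B).
  { apply RInt_le; auto. apply ex_all. apply phi_cont.
    apply ex_all. intro x. apply (cont_of_derive _ (s * (- exp (1/2 - x)))). auto_derive; auto. unfold Rminus; ring.
    intros x Hx. rewrite phi_eq. apply Rmult_le_compat_l. left; apply s_pos.
    assert (hq : - x^2/2 <= 1/2 - x) by (pose proof (pow2_ge_0 (x - 1)); nra). destruct (Rle_lt_or_eq_dec _ _ hq) as [h|h].
    left; apply exp_increasing; auto. rewrite h; lra. }
  rewrite Hd in H. pose proof (exp_pos (1/2 - B)). pose proof s_pos. pose proof s_le.
  pose proof exp_half. replace (1/2 - 0) with (1/2) in H by ring. nra.
Qed.

Lemma H_sq d t : H d t ^ 2 = / INR (Factorial.fact d) * He d t ^ 2.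
Proof.
  unfold H. assert (0 < INR (Factorial.fact d)) by (apply lt_0_INR, Factorial.lt_O_fact).
  unfold Rdiv. rewrite Rpow_mult_distr, pow_inv. simpl. rewrite !Rmult_1_r, sqrt_sqrt by lra. ring.
Qed.

Lemma H_cont d x : continuous (H d) x.
Proof. unfold H, Rdiv. apply (cont_mult (He d) (fun _ => _)). apply He_cont. apply cont_const. Qed.

Lemma sq_cont (f : R -> R) x : continuous f x -> continuous (fun y => f y ^ 2) x.
Proof. intros. apply (cont_mult f (fun y => f y ^ 1)); auto. apply (cont_mult f (fun _ => 1)); auto. apply cont_const. Qed.

Lemma A_bound d a b : 0 <= a -> a <= b -> RInt (fun x => H d x ^ 2 * phi x) a b <= 7/8.
Proof.
  intros Ha Hab.
  set (B := Rmax b (2 * INR d + 2)).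
  assert (HbB : b <= B) by apply Rmax_l.
  assert (HB2 : 2 * INR d + 2 <= B) by apply Rmax_r.
  pose proof (pos_INR d).
  eapply Rle_trans. apply (sub_int _ a b 0 B); auto; try lra.
  - intro x. apply cont_mult. apply sq_cont, H_cont. apply phi_cont.
  - intro x. apply Rmult_le_pos. apply pow2_ge_0. left; apply phi_pos.
  - rewrite (RInt_ext' _ (fun x => / INR (Factorial.fact d) * (He d x ^ 2 * phi x))).
    2:{ intro x. rewrite H_sq. ring. }
    rewrite RInt_Rscal.
    2:{ apply ex_all. intro x. apply cont_mult. apply sq_cont, He_cont. apply phi_cont. }
    assert (0 < INR (Factorial.fact d)) by (apply lt_0_INR, Factorial.lt_O_fact).
    pose proof (L2 d B ltac:(lra) ltac:(nra)).
    pose proof (phi_int_bound B ltac:(lra)).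
    apply Rmult_le_reg_l with (INR (Factorial.fact d)); auto.
    rewrite <- Rmult_assoc, Rinv_r, Rmult_1_l by lra.
    assert (INR (Factorial.fact d) * RInt phi 0 B <= INR (Factorial.fact d) * (7/8))
      by (apply Rmult_le_compat_l; lra).
    lra.
Qed.

Lemma Rderive_opp (f : R -> R) (x l : R) : is_derive f x l -> is_derive (fun y => - f y) x (- l).
Proof. intro H. exact (is_derive_opp (K:=R_AbsRing) (V:=R_NormedModule) f x l H). Qed.

Definition g d t := Rabs (H d t) / t.

Lemma g_cont d t : 0 < t -> continuous (g d) t.
Proof.
  intro Ht. unfold g, Rdiv. apply (cont_mult (fun y => Rabs (H d y)) (fun y => / y)).
  apply continuous_Rabs_comp, H_cont. apply continuous_Rinv. lra.
Qed.

Lemma g_nonneg d t : 0 < t -> 0 <= g d t.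
Proof. intro Ht. unfold g. apply Rdiv_le_0_compat. apply Rabs_pos. auto. Qed.

Lemma ex_g_pos (h : R -> R) a b : (forall t, 0 < t -> continuous h t) -> 0 < a -> 0 < b -> ex_RInt h a b.
Proof. intros Hc Ha Hb. apply ex_cont. intros z Hz. apply Hc.
  assert (0 < Rmin a b) by (apply Rmin_glb_lt; auto). lra. Qed.

Lemma locally_pos x : 0 < x -> locally x (fun y => 0 < y).
Proof.
  intro Hx. assert (Hp : 0 < x / 2) by lra. exists (mkposreal _ Hp).
  intros y Hy. change (Rabs (y - x) < x / 2) in Hy. apply Rabs_def2 in Hy. lra.
Qed.

Lemma F_deriv d tau x : 0 < tau -> 0 < x -> is_derive (fun y => RInt (g d) tau y) x (g d x).
Proof.
  intros Ht Hx. apply (is_derive_RInt (V:=R_NormedModule) (g d) (fun y => RInt (g d) tau y) tau x).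
  - eapply filter_imp; [|apply (locally_pos x Hx)]. intros y Hy.
    apply (RInt_correct (V:=R_CompleteNormedModule)). apply ex_g_pos; auto. intros; apply g_cont; auto.
  - apply g_cont; auto.
Qed.

Lemma Phi_deriv a x : is_derive (fun y => RInt phi a y) x (phi x).
Proof.
  apply (is_derive_RInt (V:=R_NormedModule) phi (fun y => RInt phi a y) a x).
  - apply filter_forall. intro y. apply (RInt_correct (V:=R_CompleteNormedModule)). apply ex_all, phi_cont.
  - apply phi_cont.
Qed.

Lemma T_deriv b x : is_derive (fun y => - RInt phi y b) x (phi x).
Proof.
  eapply is_derive_eq. apply Rderive_opp.
  apply (is_derive_RInt' (V:=R_NormedModule) phi (fun y => RInt phi y b) x b).
  - apply filter_forall. intro y. apply (RInt_correct (V:=R_CompleteNormedModule)). apply ex_all, phi_cont.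
  - apply phi_cont.
  - change (- - phi x = phi x). ring.
Qed.

Lemma xphi_int a b : RInt (fun x => x * phi x) a b = phi a - phi b.
Proof.
  apply (is_RInt_unique (V:=R_CompleteNormedModule)).
  replace (phi a - phi b) with ((- phi b) - (- phi a)) by ring.
  apply (is_RInt_derive (fun x => - phi x)).
  - intros x _. eapply is_derive_eq. apply Rderive_opp. apply phi_deriv. change (- (- x * phi x) = x * phi x). ring.
  - intros x _. apply cont_mult. apply cont_id. apply phi_cont.
Qed.

Lemma mills t b : 0 < t -> t <= b -> RInt phi t b <= phi t / t.
Proof.
  intros Ht Htb.
  assert (RInt phi t b <= RInt (fun x => / t * (x * phi x)) t b).
  { apply RInt_le; auto. apply ex_all, phi_cont.
    apply ex_all. intro x. apply (cont_mult (fun _ => / t)). apply cont_const.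
    apply cont_mult. apply cont_id. apply phi_cont.
    intros x Hx. pose proof (phi_pos x).
    replace (phi x) with (/ t * (t * phi x)) at 1 by (field; lra).
    apply Rmult_le_compat_l. left; apply Rinv_0_lt_compat; auto. nra. }
  rewrite RInt_Rscal, xphi_int in H.
  2:{ apply ex_all. intro x. apply cont_mult. apply cont_id. apply phi_cont. }
  pose proof (phi_pos b). unfold Rdiv.
  assert (0 < / t) by (apply Rinv_0_lt_compat; auto). nra.
Qed.


Lemma Fd_cont d tau x : 0 < tau -> 0 < x -> continuous (fun y => RInt (g d) tau y) x.
Proof. intros; eapply cont_of_derive; apply F_deriv; auto. Qed.

Lemma integrand_cont d tau x : 0 < tau -> 0 < x -> continuous (fun y => RInt (g d) tau y * phi y) x.
Proof. intros. apply cont_mult. apply Fd_cont; auto. apply phi_cont. Qed.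

Lemma Fd_nonneg d tau x : 0 < tau -> tau <= x -> 0 <= RInt (g d) tau x.
Proof. intros. apply RInt_ge_0; auto. apply ex_g_pos; try lra. intros; apply g_cont; auto.
  intros; apply g_nonneg; lra. Qed.

Lemma Fd_nonpos d tau x : 0 < x -> x <= tau -> RInt (g d) tau x <= 0.
Proof. intros. rewrite RInt_swap'. 2:{ apply ex_g_pos; try lra. intros; apply g_cont; auto. }
  assert (0 <= RInt (g d) x tau); [|lra].
  apply RInt_ge_0; auto. apply ex_g_pos; try lra. intros; apply g_cont; auto.
  intros; apply g_nonneg; lra. Qed.

Lemma amgm h u e : 0 < e -> 0 <= h -> h * u <= (e * h ^ 2 + u ^ 2 / e) / 2.
Proof.
  intros He Hh.
  assert (0 <= (e * h - u) ^ 2 / e) by (apply Rdiv_le_0_compat; [apply pow2_ge_0|auto]).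
  replace ((e * h ^ 2 + u ^ 2 / e) / 2) with (h * u + (e * h - u) ^ 2 / e / 2) by (field; lra).
  lra.
Qed.

Lemma pointwise (Hx ph e x : R) : 0 < e -> 1 <= x -> 0 < ph ->
  Rabs Hx / x * (ph / x) <= e / 2 * (Hx ^ 2 * ph) + / (2 * e) * (x * ph).
Proof.
  intros Hep Hx1 Hph.
  pose proof (amgm (Rabs Hx) (/ x ^ 2) e Hep (Rabs_pos _)) as H2.
  assert (Hsq : Rabs Hx ^ 2 = Hx ^ 2) by (rewrite <- !Rsqr_pow2; symmetry; apply Rsqr_abs).
  rewrite Hsq in H2.
  assert (Hu : (/ x ^ 2) ^ 2 <= x).
  { assert (0 < / x <= 1).
    { split. apply Rinv_0_lt_compat; lra. rewrite <- Rinv_1. apply Rinv_le_contravar; lra. }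
    rewrite <- !pow_inv. rewrite <- pow_mult.
    assert (Hq : (/ x) ^ (2*2) <= 1 ^ (2*2)) by (apply pow_incr; lra). rewrite pow1 in Hq.
    lra. }
  assert (Hu' : (/ x ^ 2) ^ 2 / e <= x / e).
  { unfold Rdiv. apply Rmult_le_compat_r; auto. left; apply Rinv_0_lt_compat; auto. }
  replace (Rabs Hx / x * (ph / x)) with ((Rabs Hx * / x ^ 2) * ph) by (field; lra).
  replace (e / 2 * (Hx ^ 2 * ph) + / (2 * e) * (x * ph)) with
      ((e * Hx ^ 2 + x / e) / 2 * ph) by (field; lra).
  apply Rmult_le_compat_r. lra. lra.
Qed.

Lemma T'_deriv b x : is_derive (fun y => RInt phi y b) x (- phi x).
Proof.
  apply (is_derive_RInt' (V:=R_NormedModule) phi (fun y => RInt phi y b) x b).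
  - apply filter_forall. intro y. apply (RInt_correct (V:=R_CompleteNormedModule)). apply ex_all, phi_cont.
  - apply phi_cont.
Qed.

Lemma pos_bound d tau b : 1 <= tau -> tau <= b ->
  RInt (fun y => RInt (g d) tau y * phi y) tau b <= 11/16 * exp (- tau ^ 2 / 4).
Proof.
  intros Ht Hb.
  assert (Hi := ibp (fun y => RInt (g d) tau y) (g d) (fun y => - RInt phi y b) phi tau b).
  lapply Hi; [intro Hi'; clear Hi|].
  2:{ intros x Hx. rewrite Rmin_left, Rmax_right in Hx by lra.
      split; [|split; [|split]]. apply F_deriv; lra. apply T_deriv. apply g_cont; lra. apply phi_cont. }
  rewrite Hi'. clear Hi'.
  replace (RInt (g d) tau tau) with 0 by (rewrite (RInt_point (V:=R_CompleteNormedModule)); reflexivity).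
  replace (RInt phi b b) with 0 by (rewrite (RInt_point (V:=R_CompleteNormedModule)); reflexivity).
  set (e := exp (- tau ^ 2 / 4)).
  assert (Hep : 0 < e) by apply exp_pos.
  set (c := fun x => e / 2 * (H d x ^ 2 * phi x) + / (2 * e) * (x * phi x)).
  assert (Hc : forall x, continuous c x).
  { intro x. unfold c. apply cont_plus; apply (cont_mult (fun _ => _)); try apply cont_const.
    apply cont_mult. apply sq_cont, H_cont. apply phi_cont. apply cont_mult. apply cont_id. apply phi_cont. }
  assert (Hle : RInt (fun x => g d x * (- RInt phi x b)) tau b >= - RInt c tau b).
  { rewrite (RInt_ext' _ (fun x => -1 * (g d x * RInt phi x b))) by (intro; ring).
    assert (Ex : ex_RInt (fun x => g d x * RInt phi x b) tau b).
    { apply ex_cont. intros z Hz. rewrite Rmin_left, Rmax_right in Hz by lra.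
      apply cont_mult. apply g_cont; lra.
      apply (cont_of_derive _ (- phi z)). apply T'_deriv. }
    rewrite RInt_Rscal by auto.
    assert (RInt (fun x => g d x * RInt phi x b) tau b <= RInt c tau b); [|lra].
    apply RInt_le; auto. apply ex_all; auto.
    intros x Hx.
    assert (Hx0 : 0 < x) by lra.
    pose proof (mills x b Hx0 ltac:(lra)).
    pose proof (g_nonneg d x Hx0).
    apply Rle_trans with (g d x * (phi x / x)). apply Rmult_le_compat_l; auto.
    unfold c, g. apply pointwise; auto. lra. apply phi_pos. }
  unfold c in Hle.
  rewrite RInt_Rplus in Hle.
  2:{ apply ex_all. intro x. apply (cont_mult (fun _ => _)). apply cont_const. apply cont_mult. apply sq_cont, H_cont. apply phi_cont. }
  2:{ apply ex_all. intro x. apply (cont_mult (fun _ => _)). apply cont_const. apply cont_mult. apply cont_id. apply phi_cont. }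
  rewrite !RInt_Rscal, xphi_int in Hle.
  2:{ apply ex_all. intro x. apply cont_mult. apply cont_id. apply phi_cont. }
  2:{ apply ex_all. intro x. apply cont_mult. apply sq_cont, H_cont. apply phi_cont. }
  pose proof (A_bound d tau b ltac:(lra) Hb) as HA.
  pose proof (phi_pos b) as Hpb.
  assert (Hpt : phi tau = s * (e * e)).
  { rewrite phi_eq. unfold e. rewrite <- exp_plus. f_equal. f_equal. field. }
  pose proof s_le as Hsl. pose proof s_pos as Hsp.
  assert (Hq1 : / (2 * e) * (phi tau - phi b) <= 1/4 * e).
  { rewrite Hpt. assert (/ (2 * e) * (s * (e * e)) = s / 2 * e) by (field; lra).
    assert (0 < / (2 * e)) by (apply Rinv_0_lt_compat; lra). nra. }
  assert (Hq2 : e / 2 * RInt (fun x => Defs.H d x ^ 2 * phi x) tau b <= e / 2 * (7/8)) by (apply Rmult_le_compat_l; lra).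
  lra.
Qed.


Lemma RInt_cst (c a b : R) : RInt (fun _ => c) a b = c * (b - a).
Proof. rewrite (RInt_const (V:=R_CompleteNormedModule)). change ((b - a) * c = c * (b - a)). ring. Qed.

Lemma RInt_le_0 (h : R -> R) a b : a <= b -> ex_RInt h a b -> (forall x, a < x < b -> h x <= 0) -> RInt h a b <= 0.
Proof.
  intros Hab Hex Hh. eapply Rle_trans. apply (RInt_le h (fun _ => 0)); auto.
  apply ex_all. intro; apply cont_const. rewrite RInt_cst. lra.
Qed.

Lemma neg_bound d tau a : 1 <= tau -> 0 < a -> a <= tau ->
  - (s * RInt (fun t => Rabs (H d t)) 0 tau) <= RInt (fun y => RInt (g d) tau y * phi y) a tau.
Proof.
  intros Ht Ha Hat.
  assert (Hi := ibp (fun y => RInt (g d) tau y) (g d) (fun y => RInt phi a y) phi a tau).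
  lapply Hi; [intro Hi'; clear Hi|].
  2:{ intros x Hx. rewrite Rmin_left, Rmax_right in Hx by lra.
      split; [|split; [|split]]. apply F_deriv; lra. apply Phi_deriv. apply g_cont; lra. apply phi_cont. }
  rewrite Hi'. clear Hi'.
  replace (RInt (g d) tau tau) with 0 by (rewrite (RInt_point (V:=R_CompleteNormedModule)); reflexivity).
  replace (RInt phi a a) with 0 by (rewrite (RInt_point (V:=R_CompleteNormedModule)); reflexivity).
  assert (Hc : forall x, continuous (fun t => Rabs (H d t)) x).
  { intro x. apply continuous_Rabs_comp, H_cont. }
  assert (HH : RInt (fun x => g d x * RInt phi a x) a tau <= RInt (fun t => s * Rabs (H d t)) a tau).
  { apply RInt_le; auto.
    - apply ex_cont. intros z Hz. rewrite Rmin_left, Rmax_right in Hz by lra.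
      apply cont_mult. apply g_cont; lra. eapply cont_of_derive. apply Phi_deriv.
    - apply ex_all. intro x. apply (cont_mult (fun _ => s)). apply cont_const. auto.
    - intros x Hx.
      assert (HU : RInt phi a x <= s * (x - a)).
      { rewrite <- RInt_cst. apply RInt_le; try lra. apply ex_all, phi_cont.
        apply ex_all; intro; apply cont_const. intros; apply phi_le. }
      assert (HU0 : 0 <= RInt phi a x).
      { apply RInt_ge_0; try lra. apply ex_all, phi_cont. intros; left; apply phi_pos. }
      pose proof (g_nonneg d x ltac:(lra)).
      apply Rle_trans with (g d x * (s * x)).
      + apply Rmult_le_compat_l; auto. pose proof s_pos. nra.
      + unfold g. right. field. lra. }
  rewrite RInt_Rscal in HH by (apply ex_all; auto).
  assert (HH2 : RInt (fun t => Rabs (H d t)) a tau <= RInt (fun t => Rabs (H d t)) 0 tau).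
  { apply sub_int; auto; try lra. intros; apply Rabs_pos. }
  pose proof s_pos as Hsp.
  assert (s * RInt (fun t => Rabs (H d t)) a tau <= s * RInt (fun t => Rabs (H d t)) 0 tau)
    by (apply Rmult_le_compat_l; lra).
  lra.
Qed.


Theorem lemmaA11 (d : nat) (tau : R) (htau : 1 <= tau) :
  exists I : R,
    is_RInt_gen
      (fun x => RInt (fun t => Rabs (H d t) / t) tau x * phi x)
      (at_right 0) (Rbar_locally p_infty) I
    /\ I <= exp (- tau ^ 2 / 4).
Proof.
  change (fun x => RInt (fun t => Rabs (H d t) / t) tau x * phi x)
    with (fun x => RInt (g d) tau x * phi x).
  set (f := fun x => RInt (g d) tau x * phi x).
  assert (Hfc : forall x, 0 < x -> continuous f x).
  { intros; apply integrand_cont; lra. }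
  assert (Hex : forall a b, 0 < a -> 0 < b -> ex_RInt f a b).
  { intros; apply ex_g_pos; auto. }
  destruct (lim_right (fun a => RInt f a tau) 0 tau
              (- (s * RInt (fun t => Rabs (H d t)) 0 tau))) as [l1 [Hl1 Hl1b]].
  - lra.
  - intros x y Hx Hxy Hy.
    rewrite <- (RInt_Chasles' f x y tau) by (apply Hex; lra).
    assert (RInt f x y <= 0); [|lra].
    apply RInt_le_0; auto. apply Hex; lra.
    intros z Hz. unfold f. pose proof (phi_pos z).
    pose proof (Fd_nonpos d tau z ltac:(lra) ltac:(lra)). nra.
  - intros x Hx Hxt. apply neg_bound; auto.
  - destruct (lim_pinfty (fun b => RInt f tau b) tau (11/16 * exp (- tau ^ 2 / 4))) as [l2 [Hl2 Hl2b]].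
    + intros x y Hx Hxy.
      rewrite <- (RInt_Chasles' f tau x y) by (apply Hex; lra).
      assert (0 <= RInt f x y); [|lra].
      apply RInt_ge_0; auto. apply Hex; lra.
      intros z Hz. unfold f. pose proof (phi_pos z).
      pose proof (Fd_nonneg d tau z ltac:(lra) ltac:(lra)). nra.
    + intros x Hx. apply pos_bound; auto.
    + exists (l1 + l2). split.
      * apply (is_RInt_gen_Chasles (V:=R_NormedModule) (Fa := at_right 0) (Fc := Rbar_locally p_infty) f tau l1 l2).
        -- apply gen_right; auto; try lra. intros; apply Hex; lra.
        -- apply gen_pinfty; auto. intros; apply Hex; lra.
      * rewrite (RInt_point (V:=R_CompleteNormedModule)) in Hl1b. change (zero : R) with 0 in Hl1b.
        pose proof (exp_pos (- tau ^ 2 / 4)). lra.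
Qed.
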